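(* For all integers $n\geq 1$ and $k\geq 0$, the map $\varphi$ is an involution on $A_{n,k}$, i.e. $\varphi(\varphi(\pi))=\pi$ for every $\pi\in A_{n,k}$.
   Context: For a permutation $\pi=\pi_1\cdots\pi_n$ of $[n]=\{1,\dots,n\}$, $\mathrm{des}(\pi)$ is the number of $m\in[n-1]$ with $\pi_m>\pi_{m+1}$, and $\mathrm{maxdrop}(\pi)=\max\{m-\pi_m:1\leq m\leq n\}$. $A_{n,k}$ is the set of permutations of $[n]$ with $\mathrm{maxdrop}(\pi)\leq k$. For a permutation $\sigma$ of $[n-1]$ and $1\leq r\leq n$, $\sigma\leftarrow r$ is the permutation of $[n]$ obtained by increasing every entry of $\sigma$ that is $\geq r$ by $1$ and then appending $r$ at the end. The map $\varphi:A_{n,k}\to A_{n,k}$ is defined recursively: $\varphi(1)=1$; for $n\geq 2$ and $\pi\in A_{n,k}$, let $i=\mathrm{des}(\pi)$, $j=\pi_n-n+k$, $i'=\lfloor((n+1)k-(k+1)i-j)/(k+1)\rfloor$, $j'=(n+1)k-(k+1)i-j-(k+1)i'$, let $\pi'$ be the permutation of $[n-1]$ order-isomorphic to $\pi_1\cdots\pi_{n-1}$, and set $\varphi(\pi)=\varphi(\pi')\leftarrow(n-k+j')$. *)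

(* Defs.v *)
(* Permutations of [n] are sequences of naturals with
   entries 1..n (one-line notation), pi_m = nth 0 s (m-1). *)
From mathcomp Require Import all_boot all_order all_algebra.
Set Implicit Arguments. Unset Strict Implicit. Unset Printing Implicit Defensive.
Import GRing.Theory Num.Theory.

Definition is_perm (n : nat) (s : seq nat) : bool := perm_eq s (iota 1 n).

Definition des (s : seq nat) : nat :=
  count (fun m => nth 0 s m.+1 < nth 0 s m) (iota 0 (size s).-1).

(* Computed with truncated nat
   subtraction; since some pi_m = 1 with m >= 1, the true maximum is >= 0,
   so this agrees with the integer definition on permutations. *)
Definition maxdrop (s : seq nat) : nat :=
  foldr maxn 0 [seq m.+1 - nth 0 s m | m <- iota 0 (size s)].

Definition A (n k : nat) (s : seq nat) : bool := is_perm n s && (maxdrop s <= k).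

Definition std (s : seq nat) : seq nat :=
  [seq (count (fun y => y < x) s).+1 | x <- s].

Definition ins (s : seq nat) (r : nat) : seq nat :=
  rcons [seq (if r <= x then x.+1 else x) | x <- s] r.

Local Open Scope ring_scope.

Definition phi_last (n k : nat) (s : seq nat) : int :=
  let i : int := (des s)%:Z in
  let j : int := (nth 0%N s n.-1)%:Z - n%:Z + k%:Z in
  let num : int := ((n.+1 * k)%N)%:Z - (k.+1)%:Z * i - j in
  let i' : int := (num %/ (k.+1)%:Z)%Z in
  let j' : int := num - (k.+1)%:Z * i' in
  n%:Z - k%:Z + j'.

Fixpoint phi (k n : nat) (s : seq nat) : seq nat :=
  match n with
  | 0%N => [::]
  | p.+1 =>
    if p is 0%N then [:: 1%N]
    else ins (phi k p (std (take p s))) (absz (phi_last p.+1 k s))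
  end.

(* Main.v *)
Require Import Defs.
From mathcomp Require Import all_boot all_order all_algebra.
From mathcomp Require Import zify.
Set Implicit Arguments. Unset Strict Implicit. Unset Printing Implicit Defensive.

Lemma maxdropP s k : (maxdrop s <= k) = all (fun m => m.+1 - nth 0 s m <= k) (iota 0 (size s)).
Proof. rewrite /maxdrop; elim: (iota 0 (size s)) => [|a l IH] //=; by rewrite geq_max IH. Qed.

Lemma perm_iotaP n u : uniq u -> size u = n -> (forall x, x \in u -> 0 < x <= n) ->
  is_perm n u.
Proof.
move=> Uu Su Hu; apply: uniq_perm => //; first exact: iota_uniq.
have H1 : {subset u <= iota 1 n} by move=> x /Hu; rewrite mem_iota; lia.
have H2 : size (iota 1 n) <= size u by rewrite size_iota Su.
by have [] := uniq_min_size Uu H1 H2.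
Qed.

Lemma count_iota_lt x m n : count (fun y => y < x) (iota m n) = minn (m + n) x - m.
Proof. elim: n m => [|n IH] m /=; first lia. rewrite IH; lia. Qed.

Lemma perm_props n s : is_perm n s ->
  [/\ uniq s, size s = n, forall x, (x \in s) = (0 < x <= n) &
      forall x, count (fun y => y < x) s = minn n.+1 x - 1].
Proof.
move=> P; split.
- by rewrite (perm_uniq P) iota_uniq.
- by rewrite (perm_size P) size_iota.
- by move=> x; rewrite (perm_mem P) mem_iota; lia.
- by move=> x; move/permP: P => ->; rewrite count_iota_lt add1n.
Qed.

Definition hh (r x : nat) := if r <= x then x.+1 else x.

Lemma hh_mono r : {mono hh r : x y / x < y}.
Proof. move=> x y; rewrite /hh; case: (leqP r x); case: (leqP r y) => H1 H2; apply/idP/idP; lia. Qed.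

Lemma std_map_mono f s : {mono f : x y / x < y} -> std (map f s) = std s.
Proof.
move=> Mf; rewrite /std -map_comp; apply: eq_map => x /=.
by rewrite count_map; congr S; apply: eq_count => y /=; rewrite Mf.
Qed.

Lemma std_perm n s : is_perm n s -> std s = s.
Proof.
move=> /perm_props [_ _ Mem Cnt]; apply: map_id_in => x xs.
rewrite Cnt; move: xs; rewrite Mem; lia.
Qed.
Lemma insE s r : ins s r = rcons (map (hh r) s) r.
Proof. by []. Qed.

Lemma std_take_ins n s r : is_perm n s -> std (take n (ins s r)) = s.
Proof.
move=> P; have [_ Sz _ _] := perm_props P.
rewrite insE -cats1 take_size_cat ?size_map // std_map_mono ?(std_perm P) //.
exact: hh_mono.
Qed.

Lemma std_take p s : is_perm p.+1 s ->
  std (take p s) = map (fun x => x - (nth 0 s p < x)) (take p s).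
Proof.
move=> P; have [U Sz Mem Cnt] := perm_props P.
have E : s = rcons (take p s) (nth 0 s p).
  by rewrite -take_nth ?Sz // take_oversize ?Sz.
apply/eq_in_map => x xt /=.
have xs : x \in s by rewrite E mem_rcons in_cons xt orbT.
have := Cnt x; rewrite {1}E -cats1 count_cat /= addn0.
move: xs; rewrite Mem; lia.
Qed.

Lemma ins_std_take p s : is_perm p.+1 s -> ins (std (take p s)) (nth 0 s p) = s.
Proof.
move=> P; have [U Sz Mem Cnt] := perm_props P.
have E : s = rcons (take p s) (nth 0 s p).
  by rewrite -take_nth ?Sz // take_oversize ?Sz.
rewrite (std_take P) insE -map_comp [RHS]E; congr (rcons _ _).
apply: map_id_in => x xt /=.
move: U; rewrite {1}E rcons_uniq => /andP [nv _].
have xv : x != nth 0 s p by apply: contraNneq nv => <-.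
rewrite /hh; move: xv; case: (ltnP (nth 0 s p) x) => H; case: leqP; lia.
Qed.
Lemma AP n k s : A n k s ->
  is_perm n s /\ forall m, m < n -> m.+1 - nth 0 s m <= k.
Proof.
rewrite /A maxdropP => /andP [P /allP D]; split => // m mn.
have [_ Sz _ _] := perm_props P.
by apply: D; rewrite mem_iota Sz.
Qed.

Lemma APr n k s : is_perm n s -> (forall m, m < n -> m.+1 - nth 0 s m <= k) -> A n k s.
Proof.
move=> P D; rewrite /A P maxdropP /=; apply/allP => m.
have [_ Sz _ _] := perm_props P.
by rewrite mem_iota Sz => /andP [_ H]; apply: D.
Qed.

Lemma A_std_take p k s : A p.+1 k s -> A p k (std (take p s)).
Proof.
move=> /AP [P D]; have [U Sz Mem Cnt] := perm_props P.
rewrite (std_take P).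
set v := nth 0 s p.
have vs : v \in s by rewrite mem_nth // Sz.
have Hv := D p (ltnSn p); rewrite -/v in Hv.
have := vs; rewrite Mem => /andP [v1 v2].
have E : s = rcons (take p s) v.
  by rewrite -take_nth ?Sz // take_oversize ?Sz.
have nvt : v \notin take p s by move: U; rewrite {1}E rcons_uniq => /andP [].
have ts : forall x, x \in take p s -> x \in s by move=> x xt; rewrite E mem_rcons in_cons xt orbT.
have St : size (take p s) = p by rewrite size_takel // Sz.
apply: APr.
- apply: perm_iotaP.
  + rewrite map_inj_in_uniq.
      by move: U; rewrite {1}E rcons_uniq => /andP [].
    move=> x y xt yt /=.
    have xv : x != v by apply: contraNneq nvt => <-.
    have yv : y != v by apply: contraNneq nvt => <-.
    move: xv yv; case: (ltnP v x); case: (ltnP v y); lia.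
  + by rewrite size_map.
  + move=> y /mapP [x xt ->].
    have xv : x != v by apply: contraNneq nvt => <-.
    move: (ts x xt); rewrite Mem; move: xv; case: (ltnP v x); lia.
- move=> m mp.
  rewrite (nth_map 0) ?St // nth_take //.
  have := D m (leqW mp).
  have ms : nth 0 s m \in s by rewrite mem_nth // Sz; lia.
  move: ms; rewrite Mem; case: (ltnP v (nth 0 s m)); lia.
Qed.

Lemma A_ins p k s r : A p k s -> 0 < r <= p.+1 -> p.+1 - r <= k -> A p.+1 k (ins s r).
Proof.
move=> /AP [P D] Hr Hk; have [U Sz Mem Cnt] := perm_props P.
have Sm : size (map (hh r) s) = p by rewrite size_map.
rewrite insE; apply: APr.
- apply: perm_iotaP.
  + rewrite rcons_uniq map_inj_uniq ?U ?andbT.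
      apply/mapP => [[x _ E]]; move: E; rewrite /hh; case: leqP; lia.
    by move=> x y; rewrite /hh; case: (leqP r x); case: (leqP r y); lia.
  + by rewrite size_rcons Sm.
  + move=> y; rewrite mem_rcons in_cons => /orP [/eqP -> //|/mapP [x xs ->]].
    move: xs; rewrite Mem /hh; case: (leqP r x); lia.
- move=> m mp; rewrite nth_rcons Sm.
  case: (ltnP m p) => mp'.
    rewrite (nth_map 0) ?Sz //.
    have := D m mp'; rewrite /hh; case: (leqP r (nth 0 s m)); lia.
  have -> : m = p by lia.
  by rewrite eqxx.
Qed.
Lemma des_ins q s r : size s = q.+1 -> des (ins s r) = des s + (r <= nth 0 s q).
Proof.
move=> Sz; rewrite insE /des size_rcons size_map Sz.
have -> : q.+2.-1 = q + 1 by rewrite addn1.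
have -> : q.+1.-1 = q by [].
rewrite iotaD count_cat /= addn0 add0n.
have Sm : size (map (hh r) s) = q.+1 by rewrite size_map.
congr addn.
  apply: eq_in_count => m; rewrite mem_iota => /andP [_ mq] /=.
  have h1 : m.+1 < q.+1 by lia.
  have h2 : m < q.+1 by lia.
  by rewrite !nth_rcons Sm h1 h2 !(nth_map 0) ?Sz // hh_mono.
rewrite !nth_rcons Sm ltnn eqxx ltnSn (nth_map 0) ?Sz // /hh.
case: (leqP r (nth 0 s q)); lia.
Qed.
Import GRing.Theory Num.Theory.
Local Open Scope ring_scope.

Lemma arith (k j j' x y D : int) (a b : bool) :
  0 <= j <= k -> 0 <= j' <= k -> 0 <= x <= k -> 0 <= y <= k ->
  j + j' - x - y = k - (k + 1) * D -> a = (j < x) -> b = (j' < y) ->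
  (a : nat)%:Z + (b : nat)%:Z = D.
Proof.
move=> Hj Hj' Hx Hy E -> ->.
have D0 : 0 <= D by nia.
have D2 : D <= 2 by nia.
have : D = 0 \/ D = 1 \/ D = 2 by lia.
case=> [ED|[ED|ED]]; rewrite ED in E *; case: (ltrP j x); case: (ltrP j' y); lia.
Qed.
Lemma inv_step (k p v x y r ds ds' dsg q j' : int) (a b : bool) :
  0 <= k -> 0 <= p ->
  0 < v <= p + 2 -> p + 2 - v <= k ->
  0 < x <= p + 1 -> p + 1 - x <= k ->
  0 < y <= p + 1 -> p + 1 - y <= k ->
  0 <= j' < k + 1 ->
  (p + 3) * k - (k + 1) * ds - (v - (p + 2) + k) = q * (k + 1) + j' ->
  ds = ds' + (a : nat)%:Z ->
  (k + 1) * ds' + (x - (p + 1) + k) + (k + 1) * dsg + (y - (p + 1) + k) = (p + 2) * k ->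
  r = p + 2 - k + j' ->
  a = (v <= x) -> b = (r <= y) ->
  (k + 1) * ds + (v - (p + 2) + k) + (k + 1) * (dsg + (b : nat)%:Z) + (r - (p + 2) + k)
    = (p + 3) * k.
Proof.
move=> k0 p0 Hv1 Hv2 Hx1 Hx2 Hy1 Hy2 Hj Ediv Eds IHinv Er Ea Eb.
have key := @arith k (v - (p + 2) + k) j' (x - (p + 1) + k) (y - (p + 1) + k)
     (ds + q - dsg - ds') a b.
have := key ltac:(lia) ltac:(lia) ltac:(lia) ltac:(lia) ltac:(lia).
rewrite Ea Eb => {}key.
have {}key := key ltac:(by apply/idP/idP; lia) ltac:(by apply/idP/idP; lia).
lia.
Qed.
Definition jv n k s : int := (nth 0%N s n.-1)%:Z - n%:Z + k%:Z.

Definition inv n k s t : Prop :=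
  (k.+1)%:Z * (des s)%:Z + jv n k s + (k.+1)%:Z * (des t)%:Z + jv n k t = ((n.+1 * k)%N)%:Z.

Lemma phi_lastE n k s : phi_last n k s =
  n%:Z - k%:Z + modz (((n.+1*k)%N)%:Z - (k.+1)%:Z * (des s)%:Z - jv n k s) (k.+1)%:Z.
Proof. rewrite /phi_last /modz /jv /=; congr (_ + (_ - _)); exact: mulrC. Qed.

Lemma A1 k s : A 1 k s -> s = [:: 1%N].
Proof. by move=> /andP [P _]; apply: perm_small_eq P. Qed.

Lemma A_bounds n k s : A n.+1 k s -> (0 < nth 0 s n <= n.+1 /\ n.+1 - nth 0 s n <= k)%N.
Proof.
move=> /AP [P D]; have [_ Sz Mem _] := perm_props P.
split; last exact: D.
by rewrite -Mem mem_nth // Sz.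
Qed.
Lemma main p k : forall s, A p.+1 k s ->
  [/\ A p.+1 k (phi k p.+1 s), inv p.+1 k s (phi k p.+1 s) & phi k p.+1 (phi k p.+1 s) = s].
Proof.
elim: p => [|p IH] s As.
  rewrite (A1 As); split => //; rewrite /inv /jv /des /=; lia.
have As' := A_std_take As.
have [IHA IHinv IHinvol] := IH _ As'.
have phiS : phi k p.+2 s = ins (phi k p.+1 (std (take p.+1 s))) (absz (phi_last p.+2 k s)) by [].
rewrite phi_lastE in phiS.
move: As' IHA IHinv IHinvol phiS.
set s' := std (take p.+1 s); set sg := phi k p.+1 s' => As' IHA IHinv IHinvol phiS.
have [P _] := AP As.
have Es : ins s' (nth 0%N s p.+1) = s := ins_std_take P.
have [Ps' _] := AP As'. have [_ Ss' _ _] := perm_props Ps'.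
have [Psg _] := AP IHA. have [_ Ssg _ _] := perm_props Psg.
have desS : des s = (des s' + (nth 0%N s p.+1 <= nth 0%N s' p))%N.
  by have := des_ins (nth 0%N s p.+1) Ss'; rewrite Es.
have [Bv1 Bv2] := A_bounds As.
have [Bx1 Bx2] := A_bounds As'.
have [By1 By2] := A_bounds IHA.
move: phiS.
set num := (((p.+3 * k)%N)%:Z - (k.+1)%:Z * (des s)%:Z - jv p.+2 k s).
have Ediv := divz_eq num (k.+1)%:Z.
have Mge : 0 <= modz num (k.+1)%:Z by apply: modz_ge0.
have Mlt : modz num (k.+1)%:Z < (k.+1)%:Z by apply: ltz_pmod.
move: Ediv Mge Mlt.
set j' := modz num _; set q := divz num _ => Ediv Mge Mlt phiS.
have E1 : j' + (nth 0%N s p.+1)%:Z = (k.+1)%:Z * ((p.+2)%:Z - (des s)%:Z - q).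
  move: Ediv; rewrite /num /jv /=; lia.
move: E1; set E := (_ - _ - q) => E1.
have E1' : 1 <= E by nia.
have rpos : 0 < (p.+2)%:Z - k%:Z + j' by nia.
set r := absz (p.+2%:Z - k%:Z + j') in phiS.
have rE : (r:int) = p.+2%:Z - k%:Z + j' by rewrite /r; apply: gez0_abs; lia.
have Hr : (0 < r <= p.+2)%N by lia.
have Hrk : (p.+2 - r <= k)%N by lia.
have Aphi : A p.+2 k (phi k p.+2 s) by rewrite phiS; apply: A_ins.
have desP : des (phi k p.+2 s) = (des sg + (r <= nth 0%N sg p))%N by rewrite phiS; apply: des_ins.
have lastP : nth 0%N (phi k p.+2 s) p.+1 = r.
  by rewrite phiS insE nth_rcons size_map Ssg ltnn eqxx.
have Inv : inv p.+2 k s (phi k p.+2 s).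
  rewrite /inv /jv /= lastP desP.
  move: IHinv Ediv; rewrite /inv /jv /num /jv /= => IHinv Ediv.
  clear phiS IH As As' IHA IHinvol P Es Ps' Psg Aphi lastP desP E1 E1' rpos Hr Hrk.
  have := @inv_step k p (nth 0%N s p.+1) (nth 0%N s' p) (nth 0%N sg p) r (des s) (des s')
    (des sg) q j' (nth 0%N s p.+1 <= nth 0%N s' p)%N (r <= nth 0%N sg p)%N
    ltac:(lia) ltac:(lia) ltac:(lia) ltac:(lia) ltac:(lia) ltac:(lia) ltac:(lia) ltac:(lia)
    ltac:(lia) ltac:(lia) ltac:(lia) ltac:(lia) ltac:(lia) ltac:(by rewrite lez_nat)
    ltac:(by rewrite lez_nat).
  lia.
split => //.
have phiS2 : phi k p.+2 (phi k p.+2 s) = ins (phi k p.+1 (std (take p.+1 (phi k p.+2 s))))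
  (absz (phi_last p.+2 k (phi k p.+2 s))) by [].
have Hnum : ((p.+3 * k)%N)%:Z - (k.+1)%:Z * (des (phi k p.+2 s))%:Z - jv p.+2 k (phi k p.+2 s)
   = (des s)%:Z * (k.+1)%:Z + jv p.+2 k s.
  move: Inv; rewrite /inv; lia.
rewrite phiS2 phi_lastE Hnum modzMDl modz_small; last first.
  rewrite /jv /=; lia.
have -> : p.+2%:Z - k%:Z + jv p.+2 k s = (nth 0%N s p.+1)%:Z by rewrite /jv /=; lia.
rewrite absz_nat phiS (std_take_ins _ Psg) IHinvol.
exact: Es.
Qed.

Close Scope ring_scope.

Theorem lemma2p3 (n k : nat) (s : seq nat) :
  (1 <= n)%N -> A n k s -> phi k n (phi k n s) = s.
Proof.
case: n => [//|p] _ As.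
by have [_ _ ->] := main As.
Qed.
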